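(* Let $S$ be a polygonal domain and $P\in\mathcal{F}_2[S]$. Then $P$ can be normalized to a boundary configuration by a feasible schedule within $S$ in which neither robot makes a turn, and $P$ can be normalized to a corner configuration by a feasible schedule within $S$ in which each robot makes at most one turn.
   Context: A polygonal domain is a closed region bounded by an outer simple polygon, possibly containing polygonal holes. Robots are axis-parallel unit squares: a robot at $p$ occupies $p+\boxdot$, $\boxdot=\{q:\|q\|_\infty\le1/2\}$. A configuration of two robots is a pair $(p_1,p_2)$ with $\|p_1-p_2\|_\infty\ge1$; it is in $S$ if the interior of each robot is contained in $S$; $\mathcal{F}_2[S]$ is the set of such configurations. The inner Minkowski sum is $\mathrm{inner}(S)=\{x\in S:\min_{y\in\partial S}\|y-x\|_\infty\ge 1/2\}$, where $\partial S$ is the boundary of $S$. A configuration $(p_1,p_2)\in\mathcal{F}_2[S]$ is a boundary configuration if $p_1,p_2$ both lie on the boundary of $\mathrm{inner}(S)$, and a corner configuration if both lie at vertices of $\mathrm{inner}(S)$. A trajectory over $T$ is a $1$-Lipschitz (w.r.t. $L_1$) map $m:T\to\mathbb{R}^2$ with polygonal-chain image; a turn is a point of the image where two segments of different orientations meet. A schedule $(m_1,m_2)$ is feasible within $S$ if all its configurations lie in $\mathcal{F}_2[S]$. The orderings are $\{x(p_1)\ge x(p_2)+1\}$, $\{x(p_2)\ge x(p_1)+1\}$, $\{y(p_1)\ge y(p_2)+1\}$, $\{y(p_2)\ge y(p_1)+1\}$; two configurations are commonly ordered if they lie in a common ordering. Normalizing $P$ to a boundary (resp. corner) configuration means transforming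 it, by a feasible schedule within $S$, into a boundary (resp. corner) configuration commonly ordered with $P$. *)

(* Defs.v *)
From Stdlib Require Import Reals Lra List.
Import ListNotations.
Open Scope R_scope.

Definition pt : Type := (R * R)%type.
Definition origin : pt := (0, 0).

Definition linf (p q : pt) : R :=
  Rmax (Rabs (fst p - fst q)) (Rabs (snd p - snd q)).
Definition l1 (p q : pt) : R :=
  Rabs (fst p - fst q) + Rabs (snd p - snd q).

Definition on_seg (a b x : pt) : Prop :=
  exists t, 0 <= t <= 1 /\
    x = (fst a + t * (fst b - fst a), snd a + t * (snd b - snd a)).

Definition pvert (vs : list pt) (i : nat) : pt := nth i vs origin.
Definition pedge (vs : list pt) (i : nat) (x : pt) : Prop :=
  on_seg (pvert vs i) (pvert vs (S i mod length vs)) x.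

Definition poly_bd (vs : list pt) (x : pt) : Prop :=
  exists i, (i < length vs)%nat /\ pedge vs i x.

Definition simple_polygon (vs : list pt) : Prop :=
  (3 <= length vs)%nat /\ NoDup vs /\
  forall i j, (i < length vs)%nat -> (j < length vs)%nat -> i <> j ->
    (j = (S i mod length vs)%nat ->
       forall x, pedge vs i x -> pedge vs j x -> x = pvert vs j) /\
    (j <> (S i mod length vs)%nat -> i <> (S j mod length vs)%nat ->
       forall x, ~ (pedge vs i x /\ pedge vs j x)).

Fixpoint chain_avoid (C : pt -> Prop) (l : list pt) : Prop :=
  match l with
  | a :: ((b :: _) as r) => (forall z, on_seg a b z -> ~ C z) /\ chain_avoid C r
  | _ => True
  end.

Definition path_avoid (C : pt -> Prop) (x y : pt) : Prop :=
  exists l : list pt, chain_avoid C (x :: l ++ [y]).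

(* interior of a simple polygon: the points off its boundary that cannot
   be joined to points arbitrarily far away without crossing the boundary
   (the bounded component of the complement of the curve) *)
Definition poly_inside (vs : list pt) (x : pt) : Prop :=
  ~ poly_bd vs x /\
  ~ (forall M, exists y, M < linf y origin /\ path_avoid (poly_bd vs) x y).

Definition poly_region (vs : list pt) (x : pt) : Prop :=
  poly_bd vs x \/ poly_inside vs x.

Definition polygonal_domain (S : pt -> Prop) : Prop :=
  exists (outer : list pt) (holes : list (list pt)),
    simple_polygon outer /\
    Forall simple_polygon holes /\
    (forall h, In h holes -> forall x, poly_region h x -> poly_inside outer x) /\
    (forall i j, (i < j)%nat -> (j < length holes)%nat ->
       forall x, ~ (poly_region (nth i holes nil) x /\
                    poly_region (nth j holes nil) x)) /\
    (forall x, S x <-> (poly_region outer x /\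
                        forall h, In h holes -> ~ poly_inside h x)).

Definition bdry (A : pt -> Prop) (x : pt) : Prop :=
  forall e, 0 < e ->
    (exists y, linf x y < e /\ A y) /\ (exists y, linf x y < e /\ ~ A y).

(* inner Minkowski sum: points of S at L_inf distance >= 1/2 from dS *)
Definition inner (S : pt -> Prop) (x : pt) : Prop :=
  S x /\ forall y, bdry S y -> 1 / 2 <= linf y x.

(* vertex of a (polygonal) set A: a boundary point near which the boundary
   of A is not a single straight line through the point *)
Definition vertex_of (A : pt -> Prop) (p : pt) : Prop :=
  bdry A p /\
  ~ (exists e (d : pt), 0 < e /\ d <> origin /\
       forall q, linf q p < e ->
         (bdry A q <-> exists t, q = (fst p + t * fst d, snd p + t * snd d))).

(* the interior of the robot (open unit square) at p lies in S *)
Definition robot_in (S : pt -> Prop) (p : pt) : Prop :=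
  forall q, linf q p < 1 / 2 -> S q.

Definition config_in (S : pt -> Prop) (p1 p2 : pt) : Prop :=
  1 <= linf p1 p2 /\ robot_in S p1 /\ robot_in S p2.

Definition boundary_config (S : pt -> Prop) (p1 p2 : pt) : Prop :=
  config_in S p1 p2 /\ bdry (inner S) p1 /\ bdry (inner S) p2.

Definition corner_config (S : pt -> Prop) (p1 p2 : pt) : Prop :=
  config_in S p1 p2 /\ vertex_of (inner S) p1 /\ vertex_of (inner S) p2.

(* the four orderings; two configurations are commonly ordered if they
   lie in a common ordering *)
Definition commonly_ordered (p1 p2 q1 q2 : pt) : Prop :=
  (fst p1 >= fst p2 + 1 /\ fst q1 >= fst q2 + 1) \/
  (fst p2 >= fst p1 + 1 /\ fst q2 >= fst q1 + 1) \/
  (snd p1 >= snd p2 + 1 /\ snd q1 >= snd q2 + 1) \/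
  (snd p2 >= snd p1 + 1 /\ snd q2 >= snd q1 + 1).

Fixpoint chain_pts (l : list pt) (x : pt) : Prop :=
  match l with
  | [] => False
  | [a] => x = a
  | a :: ((b :: _) as r) => on_seg a b x \/ chain_pts r x
  end.

Definition image (T : R) (m : R -> pt) (x : pt) : Prop :=
  exists t, 0 <= t <= T /\ x = m t.

Definition trajectory (T : R) (m : R -> pt) : Prop :=
  (forall s t, 0 <= s <= T -> 0 <= t <= T -> l1 (m s) (m t) <= Rabs (s - t)) /\
  exists l : list pt, forall x, image T m x <-> chain_pts l x.

(* a turn: a point x of the image where two (non-degenerate) segments of
   the image with different orientations meet *)
Definition turn (T : R) (m : R -> pt) (x : pt) : Prop :=
  image T m x /\
  exists u v : pt, u <> x /\ v <> x /\
    (forall z, on_seg x u z -> image T m z) /\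
    (forall z, on_seg x v z -> image T m z) /\
    (fst u - fst x) * (snd v - snd x) - (snd u - snd x) * (fst v - fst x) <> 0.

Definition no_turn (T : R) (m : R -> pt) : Prop := forall x, ~ turn T m x.
Definition at_most_one_turn (T : R) (m : R -> pt) : Prop :=
  forall x y, turn T m x -> turn T m y -> x = y.

Definition normalizable (S : pt -> Prop) (Good : pt -> pt -> Prop)
    (TurnOK : R -> (R -> pt) -> Prop) (p1 p2 : pt) : Prop :=
  exists (T : R) (m1 m2 : R -> pt),
    0 <= T /\ trajectory T m1 /\ trajectory T m2 /\
    TurnOK T m1 /\ TurnOK T m2 /\
    m1 0 = p1 /\ m2 0 = p2 /\
    (forall t, 0 <= t <= T -> config_in S (m1 t) (m2 t)) /\
    Good (m1 T) (m2 T) /\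
    commonly_ordered p1 p2 (m1 T) (m2 T).

(* Main.v *)
Require Import Defs.
From Stdlib Require Import Reals Lra Lia List Classical.
Import ListNotations.
Open Scope R_scope.

Ltac rcases :=
  repeat match goal with
  | |- context [Rle_dec ?a ?b] => destruct (Rle_dec a b)
  | |- context [Rcase_abs ?a] => destruct (Rcase_abs a)
  | H : context [Rle_dec ?a ?b] |- _ => destruct (Rle_dec a b)
  | H : context [Rcase_abs ?a] |- _ => destruct (Rcase_abs a)
  end.
Ltac lins := unfold linf, l1, Rmax, Rmin, Rabs in *; rcases; lra.

Definition mv (p : pt) (t : R) (d : pt) : pt :=
  (fst p + t * fst d, snd p + t * snd d).

Definition closedp (Q : pt -> Prop) : Prop :=
  forall z, (forall eps, 0 < eps -> exists q, linf q z < eps /\ Q q) -> Q z.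

Lemma mv0 p d : mv p 0 d = p.
Proof. destruct p; unfold mv; simpl; f_equal; ring. Qed.

Lemma linf_refl p : linf p p = 0.
Proof. unfold linf. rewrite !Rminus_diag, Rabs_R0. unfold Rmax; rcases; lra. Qed.

Lemma linf_nonneg p q : 0 <= linf p q.
Proof. lins. Qed.

Lemma linf_sym p q : linf p q = linf q p.
Proof. unfold linf. rewrite (Rabs_minus_sym (fst p)), (Rabs_minus_sym (snd p)). auto. Qed.

Lemma linf_tri x y z : linf x z <= linf x y + linf y z.
Proof.
  unfold linf.
  assert (H1 : Rabs (fst x - fst z) <= Rabs (fst x - fst y) + Rabs (fst y - fst z)).
  { replace (fst x - fst z) with ((fst x - fst y) + (fst y - fst z)) by ring. apply Rabs_triang. }
  assert (H2 : Rabs (snd x - snd z) <= Rabs (snd x - snd y) + Rabs (snd y - snd z)).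
  { replace (snd x - snd z) with ((snd x - snd y) + (snd y - snd z)) by ring. apply Rabs_triang. }
  pose proof (Rmax_l (Rabs (fst x - fst y)) (Rabs (snd x - snd y))).
  pose proof (Rmax_r (Rabs (fst x - fst y)) (Rabs (snd x - snd y))).
  pose proof (Rmax_l (Rabs (fst y - fst z)) (Rabs (snd y - snd z))).
  pose proof (Rmax_r (Rabs (fst y - fst z)) (Rabs (snd y - snd z))).
  apply Rmax_lub; lra.
Qed.

Lemma linf_mv p s t d : linf (mv p s d) (mv p t d) <= Rabs (s - t) * linf d origin.
Proof.
  unfold linf, mv, origin; simpl. rewrite !Rminus_0_r.
  pose proof (Rmax_l (Rabs (fst d)) (Rabs (snd d))).
  pose proof (Rmax_r (Rabs (fst d)) (Rabs (snd d))).
  pose proof (Rabs_pos (s - t)).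
  apply Rmax_lub.
  - replace (fst p + s * fst d - (fst p + t * fst d)) with ((s - t) * fst d) by ring.
    rewrite Rabs_mult. apply Rmult_le_compat_l; lra.
  - replace (snd p + s * snd d - (snd p + t * snd d)) with ((s - t) * snd d) by ring.
    rewrite Rabs_mult. apply Rmult_le_compat_l; lra.
Qed.

Lemma F_closed S : closedp (robot_in S).
Proof.
  intros p H z Hz.
  destruct (H (1/2 - linf z p)) as [q [Hq1 Hq2]]. lra.
  apply Hq2. pose proof (linf_tri z p q). rewrite (linf_sym p q) in H0. lra.
Qed.

Lemma bdry_closed A : closedp (bdry A).
Proof.
  intros p H e He.
  destruct (H (e/2)) as [q [Hq1 Hq2]]. lra.
  destruct (Hq2 (e/2)) as [[y1 [Hy1 Ay1]] [y2 [Hy2 Ay2]]]. lra.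
  split.
  - exists y1; split; auto. pose proof (linf_tri p q y1). rewrite (linf_sym p q) in H0. lra.
  - exists y2; split; auto. pose proof (linf_tri p q y2). rewrite (linf_sym p q) in H0. lra.
Qed.

Lemma robot_S S p : robot_in S p -> S p.
Proof. intros H. apply H. rewrite linf_refl. lra. Qed.

Lemma exit (P : R -> Prop) (B : R) : 0 <= B -> P 0 -> ~ P B ->
  exists t0, 0 <= t0 <= B /\ (forall s, 0 <= s < t0 -> P s) /\
    (forall eta, 0 < eta -> exists s, t0 <= s < t0 + eta /\ s <= B /\ ~ P s).
Proof.
  intros HB P0 PB.
  set (E := fun t => 0 <= t <= B /\ forall s, 0 <= s <= t -> P s).
  assert (Hb : bound E). { exists B. intros t [Ht _]. lra. }
  assert (He : exists x, E x). { exists 0. split. lra. intros s Hs. replace s with 0 by lra. auto. }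
  destruct (completeness E Hb He) as [t0 [Hub Hlub]].
  assert (H0 : 0 <= t0). { apply Hub. destruct He as [x _]. unfold E. split. lra. intros s Hs. replace s with 0 by lra. auto. }
  assert (H1 : t0 <= B). { apply Hlub. intros t [Ht _]. lra. }
  assert (Hpre : forall s, 0 <= s < t0 -> P s).
  { intros s Hs. destruct (classic (exists t, E t /\ s < t)) as [[t [[_ Et] Hst]]|Hn].
    - apply Et. lra.
    - exfalso. assert (t0 <= s). { apply Hlub. intros t Et. destruct (Rle_dec t s); auto.
        exfalso; apply Hn. exists t. split; auto. lra. } lra. }
  exists t0. split. lra. split. auto.
  intros eta Heta. apply NNPP. intros Hn.
  destruct (Rlt_dec B (t0 + eta)).
  - apply Hn. exists B. split. lra. split. lra. auto.
  - assert (E (t0 + eta/2)).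
    { split. lra. intros s Hs. destruct (Rlt_dec s t0). apply Hpre; lra.
      apply NNPP. intros Ps. apply Hn. exists s. split. lra. split. lra. auto. }
    assert (t0 + eta/2 <= t0) by (apply Hub; auto). lra.
Qed.

Lemma seg_closed (Q : pt -> Prop) p d t0 : closedp Q -> linf d origin <= 1 -> 0 <= t0 -> Q p ->
  (forall s, 0 <= s < t0 -> Q (mv p s d)) -> Q (mv p t0 d).
Proof.
  intros HQ Hd Ht0 Qp Hpre. apply HQ. intros eps Heps.
  destruct (Req_dec t0 0) as [E|E].
  - exists p. subst. rewrite mv0, linf_refl. auto.
  - set (dl := Rmin t0 eps).
    assert (0 < dl) by (unfold dl, Rmin; rcases; lra).
    assert (dl <= t0) by apply Rmin_l. assert (dl <= eps) by apply Rmin_r.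
    exists (mv p (t0 - dl/2) d). split.
    + pose proof (linf_mv p (t0 - dl/2) t0 d).
      replace (t0 - dl/2 - t0) with (-(dl/2)) in H2 by ring.
      rewrite Rabs_Ropp, Rabs_pos_eq in H2 by lra.
      pose proof (linf_nonneg d origin).
      assert (dl / 2 * linf d origin <= dl/2 * 1) by (apply Rmult_le_compat_l; lra). lra.
    + apply Hpre. lra.
Qed.
Lemma F_G S x : robot_in S x -> inner S x.
Proof.
  intros H. split. apply robot_S; auto.
  intros y Hy. destruct (Rle_dec (1/2) (linf y x)) as [|Hn]; auto.
  exfalso. destruct (Hy (1/2 - linf y x)) as [_ [y' [Hy'1 Hy'2]]]. lra.
  apply Hy'2. apply H. pose proof (linf_tri y' y x). rewrite (linf_sym y' y) in H0. lra.
Qed.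

Lemma G_F S x : inner S x -> robot_in S x.
Proof.
  intros [Sx Hb] q Hq. apply NNPP. intros Sq.
  set (d := (fst q - fst x, snd q - snd x)).
  assert (Hd : linf d origin = linf q x).
  { unfold d, linf, origin; simpl. rewrite !Rminus_0_r. auto. }
  assert (Hq1 : mv x 1 d = q). { destruct q, x; unfold mv, d; simpl; f_equal; ring. }
  destruct (exit (fun t => S (mv x t d)) 1) as [t0 [Ht0 [Hpre Hpost]]].
  lra. rewrite mv0; auto. rewrite Hq1; auto.
  pose proof (linf_nonneg q x).
  assert (Hbd : bdry S (mv x t0 d)).
  { intros e He. split.
    - destruct (Req_dec t0 0) as [E|E].
      + exists x. rewrite E, mv0, linf_refl. auto.
      + set (dl := Rmin t0 e).
        assert (0 < dl) by (unfold dl, Rmin; rcases; lra).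
        assert (dl <= t0) by apply Rmin_l. assert (dl <= e) by apply Rmin_r.
        exists (mv x (t0 - dl/2) d). split.
        * pose proof (linf_mv x t0 (t0 - dl/2) d).
          replace (t0 - (t0 - dl/2)) with (dl/2) in H3 by ring.
          rewrite Rabs_pos_eq in H3 by lra. rewrite Hd in H3.
          assert (dl / 2 * linf q x <= dl/2 * (1/2)) by (apply Rmult_le_compat_l; lra). lra.
        * apply Hpre. lra.
    - destruct (Hpost e He) as [s [Hs1 [Hs2 Hs3]]].
      exists (mv x s d). split; auto.
      pose proof (linf_mv x t0 s d). rewrite Hd in H0.
      rewrite Rabs_minus_sym, Rabs_pos_eq in H0 by lra.
      assert ((s - t0) * linf q x <= (s - t0) * (1/2)) by (apply Rmult_le_compat_l; lra). lra. }
  pose proof (Hb _ Hbd).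
  pose proof (linf_mv x t0 0 d). rewrite mv0, Hd in H1. rewrite Rminus_0_r, Rabs_pos_eq in H1 by lra.
  assert (t0 * linf q x <= 1 * linf q x) by (apply Rmult_le_compat_r; lra). lra.
Qed.

Lemma G_closed S : closedp (inner S).
Proof.
  intros z H. apply F_G. apply F_closed. intros eps He. destruct (H eps He) as [q [H1 H2]].
  exists q. split; auto. apply G_F; auto.
Qed.

Lemma bdry_G S z : bdry (inner S) z -> inner S z.
Proof.
  intros H. apply G_closed. intros eps He. destruct (H eps He) as [[y [H1 H2]] _].
  exists y. split; auto. rewrite linf_sym; auto.
Qed.
Definition vmax (vs : list pt) : R :=
  fold_right (fun v acc => Rmax acc (Rmax (Rabs (fst v)) (Rabs (snd v)))) 0 vs.

Lemma vmax_nonneg vs : 0 <= vmax vs.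
Proof. induction vs; simpl. lra. pose proof (Rmax_l (vmax vs) (Rmax (Rabs (fst a)) (Rabs (snd a)))). lra. Qed.

Lemma vmax_ge vs v : In v vs -> Rabs (fst v) <= vmax vs /\ Rabs (snd v) <= vmax vs.
Proof.
  induction vs as [|a vs IH]; simpl. tauto.
  pose proof (Rmax_l (vmax vs) (Rmax (Rabs (fst a)) (Rabs (snd a)))).
  pose proof (Rmax_r (vmax vs) (Rmax (Rabs (fst a)) (Rabs (snd a)))).
  pose proof (Rmax_l (Rabs (fst a)) (Rabs (snd a))).
  pose proof (Rmax_r (Rabs (fst a)) (Rabs (snd a))).
  intros [E|E]. subst; lra. destruct (IH E); lra.
Qed.

Lemma cvx_bound a b t M : 0 <= t <= 1 -> Rabs a <= M -> Rabs b <= M -> Rabs (a + t * (b - a)) <= M.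
Proof.
  intros Ht Ha Hb. unfold Rabs in *; rcases; nra.
Qed.

Lemma bd_bound vs x : (3 <= length vs)%nat -> poly_bd vs x ->
  Rabs (fst x) <= vmax vs /\ Rabs (snd x) <= vmax vs.
Proof.
  intros Hl [i [Hi [t [Ht E]]]].
  assert (Ha : In (pvert vs i) vs) by (apply nth_In; auto).
  assert (Hb : In (pvert vs (S i mod length vs)) vs).
  { apply nth_In. apply Nat.mod_upper_bound. lia. }
  apply vmax_ge in Ha. apply vmax_ge in Hb.
  rewrite E; simpl. split; apply cvx_bound; tauto.
Qed.

Lemma far_out vs q (f : pt -> R) : (3 <= length vs)%nat ->
  (forall c z, f (c * fst z, c * snd z) = c * f z) ->
  (forall y, Rabs (f y) <= linf y origin) ->
  (forall z, Rabs (fst z) <= vmax vs -> Rabs (snd z) <= vmax vs -> Rabs (f z) <= vmax vs) ->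
  vmax vs < Rabs (f q) -> ~ poly_region vs q.
Proof.
  intros Hl Hf Hlf Hfb Hq.
  assert (Hnb : forall z, vmax vs < Rabs (f z) -> ~ poly_bd vs z).
  { intros z Hz Hbd. apply bd_bound in Hbd; auto. destruct Hbd. pose proof (Hfb z H H0). lra. }
  pose proof (vmax_nonneg vs).
  intros [Hbd|[_ Hin]].
  - apply (Hnb q); auto.
  - apply Hin. intros M.
    set (k := 1 + (Rabs M + 1) / Rabs (f q)).
    assert (Hk : k * Rabs (f q) = Rabs (f q) + Rabs M + 1).
    { unfold k. field. lra. }
    assert (Hk1 : 1 <= k).
    { unfold k. assert (0 <= (Rabs M + 1) / Rabs (f q)).
      { apply Rmult_le_pos. pose proof (Rabs_pos M); lra. left; apply Rinv_0_lt_compat; lra. } lra. }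
    exists (k * fst q, k * snd q). split.
    + pose proof (Hlf (k * fst q, k * snd q)). rewrite Hf, Rabs_mult, (Rabs_pos_eq k) in H0 by lra.
      pose proof (Rle_abs M). lra.
    + exists nil. simpl. split; auto.
      intros z [t [Ht E]].
      assert (Ez : z = ((1 + t * (k - 1)) * fst q, (1 + t * (k - 1)) * snd q)).
      { rewrite E. simpl. f_equal; ring. }
      apply Hnb. rewrite Ez, Hf, Rabs_mult, (Rabs_pos_eq (1 + t * (k-1))) by nra.
      assert (1 * Rabs (f q) <= (1 + t * (k - 1)) * Rabs (f q)).
      { apply Rmult_le_compat_r. apply Rabs_pos. nra. } lra.
Qed.

Lemma F_bound S : polygonal_domain S -> exists M, 0 <= M /\
  forall q, robot_in S q -> Rabs (fst q) <= M /\ Rabs (snd q) <= M.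
Proof.
  intros [outer [holes [[Hl _] [_ [_ [_ HS]]]]]].
  exists (vmax outer). split. apply vmax_nonneg.
  intros q Hq. apply robot_S in Hq. apply HS in Hq. destruct Hq as [Hr _].
  split.
  - destruct (Rle_dec (Rabs (fst q)) (vmax outer)) as [|Hn]; auto. exfalso.
    apply (far_out outer q fst); auto. 
    + intros y. unfold linf, origin; simpl. rewrite !Rminus_0_r. apply Rmax_l.
    + lra.
  - destruct (Rle_dec (Rabs (snd q)) (vmax outer)) as [|Hn]; auto. exfalso.
    apply (far_out outer q snd); auto. 
    + intros y. unfold linf, origin; simpl. rewrite !Rminus_0_r. apply Rmax_r.
    + lra.
Qed.

Lemma escape p d M : 0 <= M -> (1/2 <= Rabs (fst d) \/ 1/2 <= Rabs (snd d)) ->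
  exists B, 0 <= B /\ (M < Rabs (fst (mv p B d)) \/ M < Rabs (snd (mv p B d))).
Proof.
  intros HM Hd. set (B := 2 * (M + Rabs (fst p) + Rabs (snd p) + 1)).
  pose proof (Rabs_pos (fst p)). pose proof (Rabs_pos (snd p)).
  exists B. split. unfold B; lra. unfold mv; simpl.
  destruct Hd as [Hd|Hd]; [left|right].
  - pose proof (Rabs_triang (fst p + B * fst d) (- fst p)).
    replace (fst p + B * fst d + - fst p) with (B * fst d) in H1 by ring.
    rewrite Rabs_Ropp, Rabs_mult, (Rabs_pos_eq B) in H1 by (unfold B; lra).
    assert (B * (1/2) <= B * Rabs (fst d)) by (apply Rmult_le_compat_l; unfold B; lra).
    unfold B in *. lra.
  - pose proof (Rabs_triang (snd p + B * snd d) (- snd p)).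
    replace (snd p + B * snd d + - snd p) with (B * snd d) in H1 by ring.
    rewrite Rabs_Ropp, Rabs_mult, (Rabs_pos_eq B) in H1 by (unfold B; lra).
    assert (B * (1/2) <= B * Rabs (snd d)) by (apply Rmult_le_compat_l; unfold B; lra).
    unfold B in *. lra.
Qed.
Definition Fbound S M := forall q, robot_in S q -> Rabs (fst q) <= M /\ Rabs (snd q) <= M.

Lemma phase1 S p e M : 0 <= M -> Fbound S M -> robot_in S p -> linf e origin <= 1 ->
  (1/2 <= Rabs (fst e) \/ 1/2 <= Rabs (snd e)) ->
  exists t1, 0 <= t1 /\ (forall s, 0 <= s <= t1 -> robot_in S (mv p s e)) /\
    bdry (inner S) (mv p t1 e).
Proof.
  intros HM HB Fp He1 He2.
  destruct (escape p e M HM He2) as [B [HB0 HBo]].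
  destruct (exit (fun t => robot_in S (mv p t e)) B) as [t0 [Ht0 [Hpre Hpost]]]; auto.
  rewrite mv0; auto.
  intros Hf. apply HB in Hf. lra.
  assert (Hc : robot_in S (mv p t0 e)).
  { apply (seg_closed (robot_in S)); auto. apply F_closed. lra. }
  exists t0. split. lra. split.
  - intros s Hs. destruct (Req_dec s t0). subst; auto. apply Hpre; lra.
  - intros eps Heps. split.
    + exists (mv p t0 e). rewrite linf_refl. split; auto. apply F_G; auto.
    + destruct (Hpost (eps/2)) as [s [Hs1 [Hs2 Hs3]]]. lra.
      exists (mv p s e). split.
      * pose proof (linf_mv p t0 s e). rewrite Rabs_minus_sym, Rabs_pos_eq in H by lra.
        pose proof (linf_nonneg e origin).
        assert ((s - t0) * linf e origin <= (s - t0) * 1) by (apply Rmult_le_compat_l; lra). lra.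
      * intros HG. apply Hs3. apply G_F; auto.
Qed.
Lemma l1unit u : Rabs (fst u) + Rabs (snd u) = 1 ->
  linf u origin <= 1 /\ (1/2 <= Rabs (fst u) \/ 1/2 <= Rabs (snd u)).
Proof.
  intros H. pose proof (Rabs_pos (fst u)). pose proof (Rabs_pos (snd u)).
  unfold linf, origin; simpl. rewrite !Rminus_0_r. split.
  apply Rmax_lub; lra. destruct (Rle_dec (1/2) (Rabs (fst u))); lra.
Qed.

Lemma phase2 S b e M : 0 <= M -> Fbound S M -> bdry (inner S) b ->
  Rabs (fst e) + Rabs (snd e) = 1 ->
  exists t2 u, 0 <= t2 /\ Rabs (fst u) + Rabs (snd u) = 1 /\
    0 <= fst u * fst e + snd u * snd e /\
    (forall s, 0 <= s <= t2 -> robot_in S (mv b s u)) /\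
    vertex_of (inner S) (mv b t2 u).
Proof.
  intros HM HB Hb He.
  destruct (classic (exists e0 (d : pt), 0 < e0 /\ d <> origin /\ forall q, linf q b < e0 ->
     (bdry (inner S) q <-> exists t, q = (fst b + t * fst d, snd b + t * snd d))))
    as [[e0 [d [He0 [Hd Hline]]]] | Hn].
  2:{ exists 0, e. split. lra. split. auto. split. nra. split.
      - intros s Hs. replace s with 0 by lra. rewrite mv0. apply G_F, bdry_G; auto.
      - rewrite mv0. split; auto. }
  set (n := Rabs (fst d) + Rabs (snd d)).
  assert (Hn : 0 < n).
  { pose proof (Rabs_pos (fst d)). pose proof (Rabs_pos (snd d)).
    destruct (Req_dec n 0) as [E|E]. 2: unfold n in *; lra.
    exfalso. apply Hd. destruct d as [d1 d2]. unfold n in E; simpl in *.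
    assert (Rabs d1 = 0) by lra. assert (Rabs d2 = 0) by lra.
    assert (d1 = 0) by (destruct (Req_dec d1 0); auto; apply Rabs_no_R0 in H3; lra).
    assert (d2 = 0) by (destruct (Req_dec d2 0); auto; apply Rabs_no_R0 in H4; lra).
    subst. reflexivity. }
  assert (Hk : exists k, Rabs k * n = 1 /\ 0 <= k * (fst d * fst e + snd d * snd e)).
  { destruct (Rle_dec 0 (fst d * fst e + snd d * snd e)).
    - exists (/ n). rewrite Rabs_pos_eq. split. field. lra.
      apply Rmult_le_pos; auto. left; apply Rinv_0_lt_compat; auto.
      left; apply Rinv_0_lt_compat; auto.
    - exists (- / n). rewrite Rabs_Ropp, Rabs_pos_eq. split. field. lra.
      assert (0 < / n) by (apply Rinv_0_lt_compat; auto). nra.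
      left; apply Rinv_0_lt_compat; auto. }
  destruct Hk as [k [Hk1 Hk2]].
  set (u := (k * fst d, k * snd d)).
  assert (Hu1 : Rabs (fst u) + Rabs (snd u) = 1).
  { unfold u; simpl. rewrite !Rabs_mult. unfold n in Hk1. lra. }
  destruct (l1unit u Hu1) as [Hu2 Hu3].
  assert (Hue : 0 <= fst u * fst e + snd u * snd e).
  { unfold u; simpl. replace (k * fst d * fst e + k * snd d * snd e) with (k * (fst d * fst e + snd d * snd e)) by ring. auto. }
  assert (Hln : forall s, linf (mv b s u) b < e0 -> bdry (inner S) (mv b s u)).
  { intros s Hs. apply Hline; auto. exists (s * k). unfold mv, u; simpl. f_equal; ring. }
  assert (Hmvb : forall s, linf (mv b s u) b <= Rabs s).
  { intros s. pose proof (linf_mv b s 0 u). rewrite mv0, Rminus_0_r in H.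
    pose proof (Rabs_pos s). pose proof (linf_nonneg u origin).
    assert (Rabs s * linf u origin <= Rabs s * 1) by (apply Rmult_le_compat_l; lra). lra. }
  destruct (escape b u M HM Hu3) as [B [HB0 HBo]].
  destruct (exit (fun t => bdry (inner S) (mv b t u)) B) as [t0 [Ht0 [Hpre Hpost]]]; auto.
  rewrite mv0; auto.
  intros Hf. apply bdry_G, G_F, HB in Hf. lra.
  assert (Ht0p : 0 < t0).
  { destruct (Req_dec t0 0) as [E|E]. 2: lra. exfalso.
    destruct (Hpost (e0/2)) as [s [Hs1 [Hs2 Hs3]]]. lra.
    apply Hs3. apply Hln. pose proof (Hmvb s). rewrite Rabs_pos_eq in H by lra. lra. }
  assert (Hc : bdry (inner S) (mv b t0 u)).
  { apply (seg_closed (bdry (inner S))); auto. apply bdry_closed. lra. }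
  exists t0, u. split. lra. split. auto. split. auto. split.
  - intros s Hs. apply G_F, bdry_G. destruct (Req_dec s t0). subst; auto. apply Hpre; lra.
  - split; auto. intros [e1 [d' [He1 [Hd' Hl']]]].
    set (s := Rmin t0 e1 / 2).
    assert (0 < s) by (unfold s, Rmin; rcases; lra).
    assert (s <= t0 / 2) by (unfold s; pose proof (Rmin_l t0 e1); lra).
    assert (s <= e1 / 2) by (unfold s; pose proof (Rmin_r t0 e1); lra).
    assert (Hlin : forall r, Rabs r * 1 < e1 -> linf (mv b (t0 + r) u) (mv b t0 u) < e1).
    { intros r Hr. pose proof (linf_mv b (t0 + r) t0 u). replace (t0 + r - t0) with r in H2 by ring.
      pose proof (Rabs_pos r). pose proof (linf_nonneg u origin).
      assert (Rabs r * linf u origin <= Rabs r * 1) by (apply Rmult_le_compat_l; lra). lra. }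
    assert (Hs1 : bdry (inner S) (mv b (t0 + - s) u)) by (apply Hpre; lra).
    apply Hl' in Hs1. 2:{ apply Hlin. rewrite Rabs_Ropp, Rabs_pos_eq by lra. lra. }
    destruct Hs1 as [t Ht].
    assert (E1 : t * fst d' = - s * fst u).
    { apply (f_equal fst) in Ht. unfold mv in Ht; simpl in Ht. unfold u; simpl. rewrite Rmult_plus_distr_r in Ht. lra. }
    assert (E2 : t * snd d' = - s * snd u).
    { apply (f_equal snd) in Ht. unfold mv in Ht; simpl in Ht. unfold u; simpl. rewrite Rmult_plus_distr_r in Ht. lra. }
    destruct (Hpost (e1/2)) as [r [Hr1 [Hr2 Hr3]]]. lra.
    apply Hr3. replace r with (t0 + (r - t0)) by ring. apply Hl'.
    + apply Hlin. rewrite Rabs_pos_eq by lra. lra.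
    + exists (- (r - t0) / s * t). unfold mv; simpl. f_equal.
      * replace (- (r - t0) / s * t * fst d') with (- (r - t0) / s * (t * fst d')) by ring.
        rewrite E1. unfold u; simpl. field. lra.
      * replace (- (r - t0) / s * t * snd d') with (- (r - t0) / s * (t * snd d')) by ring.
        rewrite E2. unfold u; simpl. field. lra.
Qed.
Definition traj (p e u : pt) (t1 t2 : R) : R -> pt := fun t =>
  (fst p + Rmin t t1 * fst e + Rmin (Rmax 0 (t - t1)) t2 * fst u,
   snd p + Rmin t t1 * snd e + Rmin (Rmax 0 (t - t1)) t2 * snd u).

Lemma traj_v1 p e u t1 t2 t : 0 <= t2 -> t <= t1 -> traj p e u t1 t2 t = mv p t e.
Proof.
  intros H2 Ht. unfold traj, mv. rewrite Rmin_left by lra. rewrite Rmax_left by lra.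
  rewrite Rmin_left by lra. f_equal; ring.
Qed.

Lemma traj_v2 p e u t1 t2 t : t1 <= t <= t1 + t2 ->
  traj p e u t1 t2 t = mv (mv p t1 e) (t - t1) u.
Proof.
  intros Ht. unfold traj, mv; simpl. rewrite Rmin_right by lra. rewrite Rmax_right by lra.
  rewrite Rmin_left by lra. f_equal; ring.
Qed.

Lemma traj_v3 p e u t1 t2 t : 0 <= t2 -> t1 + t2 <= t ->
  traj p e u t1 t2 t = mv (mv p t1 e) t2 u.
Proof.
  intros H2 Ht. unfold traj, mv; simpl. rewrite Rmin_right by lra. rewrite Rmax_right by lra.
  rewrite Rmin_right by lra. f_equal; ring.
Qed.

Lemma clamp_lip t1 t2 s t : 0 <= t1 -> 0 <= t2 -> 0 <= s -> 0 <= t ->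
  Rabs (Rmin s t1 - Rmin t t1) + Rabs (Rmin (Rmax 0 (s - t1)) t2 - Rmin (Rmax 0 (t - t1)) t2)
  <= Rabs (s - t).
Proof. intros. unfold Rmin, Rmax, Rabs; rcases; lra. Qed.

Lemma traj_lip p e u t1 t2 s t : 0 <= t1 -> 0 <= t2 -> 0 <= s -> 0 <= t ->
  Rabs (fst e) + Rabs (snd e) <= 1 -> Rabs (fst u) + Rabs (snd u) <= 1 ->
  l1 (traj p e u t1 t2 s) (traj p e u t1 t2 t) <= Rabs (s - t).
Proof.
  intros H1 H2 Hs Ht He Hu. pose proof (clamp_lip t1 t2 s t H1 H2 Hs Ht).
  set (a := Rmin s t1 - Rmin t t1) in *.
  set (c := Rmin (Rmax 0 (s - t1)) t2 - Rmin (Rmax 0 (t - t1)) t2) in *.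
  unfold l1, traj; simpl.
  replace (fst p + Rmin s t1 * fst e + Rmin (Rmax 0 (s - t1)) t2 * fst u -
     (fst p + Rmin t t1 * fst e + Rmin (Rmax 0 (t - t1)) t2 * fst u)) with (a * fst e + c * fst u)
     by (unfold a, c; ring).
  replace (snd p + Rmin s t1 * snd e + Rmin (Rmax 0 (s - t1)) t2 * snd u -
     (snd p + Rmin t t1 * snd e + Rmin (Rmax 0 (t - t1)) t2 * snd u)) with (a * snd e + c * snd u)
     by (unfold a, c; ring).
  pose proof (Rabs_triang (a * fst e) (c * fst u)).
  pose proof (Rabs_triang (a * snd e) (c * snd u)).
  rewrite !Rabs_mult in H0, H3.
  pose proof (Rabs_pos a). pose proof (Rabs_pos c).
  assert (Rabs a * (Rabs (fst e) + Rabs (snd e)) <= Rabs a * 1) by (apply Rmult_le_compat_l; lra).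
  assert (Rabs c * (Rabs (fst u) + Rabs (snd u)) <= Rabs c * 1) by (apply Rmult_le_compat_l; lra).
  nra.
Qed.

Lemma traj_image p e u t1 t2 T x : 0 <= t1 -> 0 <= t2 -> t1 + t2 <= T ->
  image T (traj p e u t1 t2) x <->
  chain_pts [p; mv p t1 e; mv (mv p t1 e) t2 u] x.
Proof.
  intros H1 H2 HT. simpl. split.
  - intros [t [Ht E]]. subst x.
    destruct (Rle_dec t t1).
    + left. rewrite traj_v1 by lra. destruct (Req_dec t1 0).
      * exists 0. split. lra. unfold mv; simpl. f_equal. 
        replace t with 0 by lra. ring. replace t with 0 by lra. ring.
      * exists (t / t1). split. split. apply Rmult_le_pos; [lra|left; apply Rinv_0_lt_compat; lra].
        apply (Rmult_le_reg_r t1). lra. unfold Rdiv. rewrite Rmult_assoc, Rinv_l by lra. lra.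
        unfold mv; simpl. f_equal; field; lra.
    + destruct (Rle_dec t (t1 + t2)).
      * rewrite traj_v2 by lra. right; left. 
        exists ((t - t1) / t2). split. split. apply Rmult_le_pos; [lra|left; apply Rinv_0_lt_compat; lra].
        apply (Rmult_le_reg_r t2). lra. unfold Rdiv. rewrite Rmult_assoc, Rinv_l by lra. lra.
        unfold mv; simpl. f_equal; field; lra.
      * rewrite traj_v3 by lra. right; right. reflexivity.
  - intros [[l [Hl E]]|[[l [Hl E]]|E]].
    + exists (l * t1). split. split. nra. nra. rewrite traj_v1 by nra. rewrite E. unfold mv; simpl. f_equal; ring.
    + exists (t1 + l * t2). split. split. nra. nra. rewrite traj_v2 by nra. rewrite E. unfold mv; simpl. f_equal; ring.
    + exists (t1 + t2). split. lra. rewrite traj_v3 by lra. auto.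
Qed.

Lemma traj_traj p e u t1 t2 T : 0 <= t1 -> 0 <= t2 -> t1 + t2 <= T ->
  Rabs (fst e) + Rabs (snd e) <= 1 -> Rabs (fst u) + Rabs (snd u) <= 1 ->
  trajectory T (traj p e u t1 t2).
Proof.
  intros. split.
  - intros s t Hs Ht. apply traj_lip; lra.
  - exists [p; mv p t1 e; mv (mv p t1 e) t2 u]. intros x. apply traj_image; auto.
Qed.
Lemma two_lines a b c d : (forall l, 0 <= l <= 1 -> a + b * l = 0 \/ c + d * l = 0) ->
  (a = 0 /\ b = 0) \/ (c = 0 /\ d = 0).
Proof.
  intros H. destruct (H 0) as [H0|H0]; [lra|..];
  destruct (H (1/2)) as [H1|H1]; try lra; destruct (H 1) as [H2|H2]; try lra.
  all: first [left; split; lra | right; split; lra].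
Qed.

Lemma par_trans w1 w2 v1 v2 e1 e2 : w1 * e2 - w2 * e1 = 0 -> v1 * e2 - v2 * e1 = 0 ->
  (e1 <> 0 \/ e2 <> 0) -> w1 * v2 - w2 * v1 = 0.
Proof.
  intros A B He.
  assert (E1 : e1 * (w1 * v2 - w2 * v1) = v1 * (w1 * e2 - w2 * e1) - w1 * (v1 * e2 - v2 * e1)) by ring.
  assert (E2 : e2 * (w1 * v2 - w2 * v1) = v2 * (w1 * e2 - w2 * e1) - w2 * (v1 * e2 - v2 * e1)) by ring.
  rewrite A, B in E1, E2. destruct He as [He|He].
  - apply (Rmult_eq_reg_l e1); auto. lra.
  - apply (Rmult_eq_reg_l e2); auto. lra.
Qed.

Lemma solve0 a1 a2 e1 e2 u1 u2 : a1 * e2 - a2 * e1 = 0 -> a1 * u2 - a2 * u1 = 0 ->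
  e1 * u2 - e2 * u1 <> 0 -> a1 = 0 /\ a2 = 0.
Proof.
  intros A B D.
  assert (E1 : a1 * (e1 * u2 - e2 * u1) = e1 * (a1 * u2 - a2 * u1) - u1 * (a1 * e2 - a2 * e1)) by ring.
  assert (E2 : a2 * (e1 * u2 - e2 * u1) = e2 * (a1 * u2 - a2 * u1) - u2 * (a1 * e2 - a2 * e1)) by ring.
  rewrite A, B in E1, E2. split.
  - apply (Rmult_eq_reg_r (e1 * u2 - e2 * u1)); auto. lra.
  - apply (Rmult_eq_reg_r (e1 * u2 - e2 * u1)); auto. lra.
Qed.

Lemma traj_lines p e u t1 t2 T z : 0 <= t1 -> 0 <= t2 ->
  image T (traj p e u t1 t2) z ->
  (fst z - fst p) * snd e - (snd z - snd p) * fst e = 0 \/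
  (fst z - fst (mv p t1 e)) * snd u - (snd z - snd (mv p t1 e)) * fst u = 0.
Proof.
  intros H1 H2 [t [Ht E]]. subst z.
  destruct (Rle_dec t t1).
  - left. rewrite traj_v1 by lra. unfold mv; simpl. ring.
  - right. destruct (Rle_dec t (t1 + t2)).
    + rewrite traj_v2 by lra. unfold mv; simpl. ring.
    + rewrite traj_v3 by lra. unfold mv; simpl. ring.
Qed.

Lemma traj_turn p e u t1 t2 T x : 0 <= t1 -> 0 <= t2 ->
  (fst e <> 0 \/ snd e <> 0) -> (fst u <> 0 \/ snd u <> 0) ->
  turn T (traj p e u t1 t2) x ->
  x = mv p t1 e /\ fst e * snd u - snd e * fst u <> 0.
Proof.
  intros H1 H2 He Hu [Hx [u' [v' [Hu' [Hv' [Su [Sv Hc]]]]]]].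
  assert (Hseg : forall w, (forall z, on_seg x w z -> image T (traj p e u t1 t2) z) ->
    ((fst x - fst p) * snd e - (snd x - snd p) * fst e = 0 /\
     (fst w - fst x) * snd e - (snd w - snd x) * fst e = 0) \/
    ((fst x - fst (mv p t1 e)) * snd u - (snd x - snd (mv p t1 e)) * fst u = 0 /\
     (fst w - fst x) * snd u - (snd w - snd x) * fst u = 0)).
  { intros w Hw. apply two_lines. intros l Hl.
    set (z := (fst x + l * (fst w - fst x), snd x + l * (snd w - snd x))).
    assert (Hz : on_seg x w z) by (exists l; split; auto).
    destruct (traj_lines p e u t1 t2 T z H1 H2 (Hw z Hz)) as [E|E]; [left|right];
      rewrite <- E; unfold z; simpl; ring. }
  destruct (Hseg u' Su) as [[A1 A2]|[B1 B2]]; destruct (Hseg v' Sv) as [[C1 C2]|[D1 D2]].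
  - exfalso. apply Hc. eapply par_trans; eauto.
  - assert (Heu : fst e * snd u - snd e * fst u <> 0).
    { intros E0. apply Hc. 
      assert (fst e * snd u - snd e * fst u = 0) by lra.
      assert (Hwu : (fst u' - fst x) * snd u - (snd u' - snd x) * fst u = 0).
      { eapply par_trans; eauto. lra. }
      eapply par_trans; eauto. }
    split; auto.
    assert (A3 : (fst x - fst (mv p t1 e)) * snd e - (snd x - snd (mv p t1 e)) * fst e = 0).
    { unfold mv; simpl. rewrite <- A1. ring. }
    destruct (solve0 _ _ _ _ _ _ A3 D1 Heu). destruct x, p; unfold mv in *; simpl in *. f_equal; lra.
  - assert (Heu : fst e * snd u - snd e * fst u <> 0).
    { intros E0. apply Hc. 
      assert (fst e * snd u - snd e * fst u = 0) by lra.
      assert (Hwu : (fst v' - fst x) * snd u - (snd v' - snd x) * fst u = 0).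
      { eapply par_trans; eauto. lra. }
      eapply par_trans; eauto. }
    split; auto.
    assert (A3 : (fst x - fst (mv p t1 e)) * snd e - (snd x - snd (mv p t1 e)) * fst e = 0).
    { unfold mv; simpl. rewrite <- C1. ring. }
    destruct (solve0 _ _ _ _ _ _ A3 B1 Heu). destruct x, p; unfold mv in *; simpl in *. f_equal; lra.
  - exfalso. apply Hc. eapply par_trans; eauto.
Qed.
Definition axis (e : pt) : Prop :=
  (fst e = 1 /\ snd e = 0) \/ (fst e = -1 /\ snd e = 0) \/
  (fst e = 0 /\ snd e = 1) \/ (fst e = 0 /\ snd e = -1).

Definition nege (e : pt) : pt := (- fst e, - snd e).

Lemma axis_neg e : axis e -> axis (nege e).
Proof. unfold axis, nege; simpl. intros [[-> ->]|[[-> ->]|[[-> ->]|[-> ->]]]]; lra. Qed.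

Lemma axis_props e : axis e -> Rabs (fst e) + Rabs (snd e) = 1 /\ linf e origin <= 1 /\
  (1/2 <= Rabs (fst e) \/ 1/2 <= Rabs (snd e)) /\ (fst e <> 0 \/ snd e <> 0) /\
  fst e * fst e + snd e * snd e = 1.
Proof.
  intros H. assert (Habs : Rabs (fst e) + Rabs (snd e) = 1).
  { unfold axis in H. destruct H as [[-> ->]|[[-> ->]|[[-> ->]|[-> ->]]]];
    unfold Rabs; rcases; lra. }
  destruct (l1unit e Habs). split; auto. split; auto. split; auto.
  unfold axis in H. destruct H as [[-> ->]|[[-> ->]|[[-> ->]|[-> ->]]]]; split; lra.
Qed.

Lemma linf_axis e x y : axis e -> (fst x - fst y) * fst e + (snd x - snd y) * snd e <= linf x y.
Proof.
  unfold axis. intros [[-> ->]|[[-> ->]|[[-> ->]|[-> ->]]]]; lins.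
Qed.

Lemma order_exists p1 p2 : 1 <= linf p1 p2 -> exists e, axis e /\
  1 <= (fst p1 - fst p2) * fst e + (snd p1 - snd p2) * snd e.
Proof.
  intros H. unfold linf, Rmax, Rabs in H. unfold axis. rcases.
  all: first [ exists (1,0); simpl; split; [tauto|lra]
             | exists (-1,0); simpl; split; [tauto|lra]
             | exists (0,1); simpl; split; [tauto|lra]
             | exists (0,-1); simpl; split; [tauto|lra] ].
Qed.

Lemma comm_ord e p1 p2 q1 q2 : axis e ->
  1 <= (fst p1 - fst p2) * fst e + (snd p1 - snd p2) * snd e ->
  1 <= (fst q1 - fst q2) * fst e + (snd q1 - snd q2) * snd e ->
  commonly_ordered p1 p2 q1 q2.
Proof.
  unfold axis, commonly_ordered. intros [[-> ->]|[[-> ->]|[[-> ->]|[-> ->]]]] A B.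
  - left; lra. - right; left; lra. - right; right; left; lra. - right; right; right; lra.
Qed.

Lemma traj_inF S p e u t1 t2 t : 0 <= t1 -> 0 <= t2 -> 0 <= t ->
  (forall s, 0 <= s <= t1 -> robot_in S (mv p s e)) ->
  (forall s, 0 <= s <= t2 -> robot_in S (mv (mv p t1 e) s u)) ->
  robot_in S (traj p e u t1 t2 t).
Proof.
  intros H1 H2 Ht P1 P2. destruct (Rle_dec t t1).
  - rewrite traj_v1 by lra. apply P1; lra.
  - destruct (Rle_dec t (t1 + t2)).
    + rewrite traj_v2 by lra. apply P2; lra.
    + rewrite traj_v3 by lra. apply P2; lra.
Qed.

Lemma traj_dot p e u t1 t2 t v : 0 <= t1 -> 0 <= t2 -> 0 <= t ->
  0 <= fst e * fst v + snd e * snd v -> 0 <= fst u * fst v + snd u * snd v ->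
  fst p * fst v + snd p * snd v <=
  fst (traj p e u t1 t2 t) * fst v + snd (traj p e u t1 t2 t) * snd v.
Proof.
  intros H1 H2 Ht Ev Uv. destruct (Rle_dec t t1).
  - rewrite traj_v1 by lra. unfold mv; simpl.
    assert (0 <= t * (fst e * fst v + snd e * snd v)) by (apply Rmult_le_pos; lra). nra.
  - assert (0 <= t1 * (fst e * fst v + snd e * snd v)) by (apply Rmult_le_pos; lra).
    destruct (Rle_dec t (t1 + t2)).
    + rewrite traj_v2 by lra. unfold mv; simpl.
      assert (0 <= (t - t1) * (fst u * fst v + snd u * snd v)) by (apply Rmult_le_pos; lra). nra.
    + rewrite traj_v3 by lra. unfold mv; simpl.
      assert (0 <= t2 * (fst u * fst v + snd u * snd v)) by (apply Rmult_le_pos; lra). nra.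
Qed.

Lemma schedule S p1 p2 e u1 u2 t1 t2 t1' t2' T : axis e ->
  1 <= (fst p1 - fst p2) * fst e + (snd p1 - snd p2) * snd e ->
  0 <= t1 -> 0 <= t2 -> 0 <= t1' -> 0 <= t2' -> t1 + t2 <= T -> t1' + t2' <= T ->
  Rabs (fst u1) + Rabs (snd u1) <= 1 -> Rabs (fst u2) + Rabs (snd u2) <= 1 ->
  0 <= fst u1 * fst e + snd u1 * snd e ->
  0 <= fst u2 * fst (nege e) + snd u2 * snd (nege e) ->
  (forall s, 0 <= s <= t1 -> robot_in S (mv p1 s e)) ->
  (forall s, 0 <= s <= t2 -> robot_in S (mv (mv p1 t1 e) s u1)) ->
  (forall s, 0 <= s <= t1' -> robot_in S (mv p2 s (nege e))) ->
  (forall s, 0 <= s <= t2' -> robot_in S (mv (mv p2 t1' (nege e)) s u2)) ->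
  trajectory T (traj p1 e u1 t1 t2) /\ trajectory T (traj p2 (nege e) u2 t1' t2') /\
  traj p1 e u1 t1 t2 0 = p1 /\ traj p2 (nege e) u2 t1' t2' 0 = p2 /\
  (forall t, 0 <= t <= T -> config_in S (traj p1 e u1 t1 t2 t) (traj p2 (nege e) u2 t1' t2' t)) /\
  commonly_ordered p1 p2 (traj p1 e u1 t1 t2 T) (traj p2 (nege e) u2 t1' t2' T) /\
  traj p1 e u1 t1 t2 T = mv (mv p1 t1 e) t2 u1 /\
  traj p2 (nege e) u2 t1' t2' T = mv (mv p2 t1' (nege e)) t2' u2.
Proof.
  intros Hax Hord H1 H2 H1' H2' HT HT' Hu1 Hu2 Hue1 Hue2 P1 P2 P1' P2'.
  pose proof (axis_props e Hax) as [Ea [Eb [Ec [Ed Ee]]]].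
  pose proof (axis_props (nege e) (axis_neg e Hax)) as [Na [Nb [Nc [Nd Ne]]]].
  assert (Hsep : forall t, 0 <= t ->
    1 <= (fst (traj p1 e u1 t1 t2 t) - fst (traj p2 (nege e) u2 t1' t2' t)) * fst e +
         (snd (traj p1 e u1 t1 t2 t) - snd (traj p2 (nege e) u2 t1' t2' t)) * snd e).
  { intros t Ht.
    pose proof (traj_dot p1 e u1 t1 t2 t e H1 H2 Ht ltac:(lra) Hue1).
    pose proof (traj_dot p2 (nege e) u2 t1' t2' t (nege e) H1' H2' Ht ltac:(lra) Hue2).
    unfold nege in *; simpl in *. lra. }
  split. apply traj_traj; lra.
  split. apply traj_traj; lra.
  split. rewrite traj_v1 by lra. apply mv0.
  split. rewrite traj_v1 by lra. apply mv0.
  split.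
  - intros t Ht. split. 
    + eapply Rle_trans. apply (Hsep t); lra. apply linf_axis; auto.
    + split; apply traj_inF; auto; lra.
  - split. apply (comm_ord e); auto. apply Hsep. lra.
    split; apply traj_v3; lra.
Qed.
Theorem lemma7p1 (S : pt -> Prop) (p1 p2 : pt) :
  polygonal_domain S -> config_in S p1 p2 ->
  normalizable S (boundary_config S) no_turn p1 p2 /\
  normalizable S (corner_config S) at_most_one_turn p1 p2.
Proof.
  intros HS [Hd [F1 F2]].
  destruct (F_bound S HS) as [M [HM HB]].
  destruct (order_exists p1 p2 Hd) as [e [Hax Hord]].
  pose proof (axis_props e Hax) as [Ea [Eb [Ec [Ed Ee]]]].
  pose proof (axis_props (nege e) (axis_neg e Hax)) as [Na [Nb [Nc [Nd Ne]]]].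
  destruct (phase1 S p1 e M HM HB F1 Eb Ec) as [t1 [Ht1 [P1 B1]]].
  destruct (phase1 S p2 (nege e) M HM HB F2 Nb Nc) as [t1' [Ht1' [P1' B1']]].
  split.
  - set (T := Rmax t1 t1').
    assert (HT1 : t1 + 0 <= T) by (unfold T; pose proof (Rmax_l t1 t1'); lra).
    assert (HT2 : t1' + 0 <= T) by (unfold T; pose proof (Rmax_r t1 t1'); lra).
    assert (Q2 : forall s, 0 <= s <= 0 -> robot_in S (mv (mv p1 t1 e) s e)).
    { intros s Hs. replace s with 0 by lra. rewrite mv0. apply P1; lra. }
    assert (Q2' : forall s, 0 <= s <= 0 -> robot_in S (mv (mv p2 t1' (nege e)) s (nege e))).
    { intros s Hs. replace s with 0 by lra. rewrite mv0. apply P1'; lra. }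
    destruct (schedule S p1 p2 e e (nege e) t1 0 t1' 0 T Hax Hord) as
      [Tr1 [Tr2 [S1 [S2 [Cf [Co [E1 E2]]]]]]]; auto; try lra.
    exists T, (traj p1 e e t1 0), (traj p2 (nege e) (nege e) t1' 0).
    split. lra. split; auto. split; auto. split.
    { intros x Hx. apply traj_turn in Hx; [destruct Hx as [_ Hx]; apply Hx; ring| ..]; auto; lra. }
    split.
    { intros x Hx. apply traj_turn in Hx; [destruct Hx as [_ Hx]; apply Hx; ring| ..]; auto; lra. }
    split; [auto|]. split; [auto|]. split; [intros t Ht; apply Cf; auto|]. split; [|auto].
    split. apply Cf. split; [|lra]. unfold T; pose proof (Rmax_l t1 t1'); lra.
    rewrite E1, E2, !mv0. split; auto.
  - destruct (phase2 S (mv p1 t1 e) e M HM HB B1 Ea) as [t2 [u1 [Ht2 [Hu1 [Hue1 [Q1 V1]]]]]].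
    destruct (phase2 S (mv p2 t1' (nege e)) (nege e) M HM HB B1' Na)
      as [t2' [u2 [Ht2' [Hu2 [Hue2 [Q1' V1']]]]]].
    set (T := Rmax (t1 + t2) (t1' + t2')).
    assert (HT1 : t1 + t2 <= T) by (unfold T; apply Rmax_l).
    assert (HT2 : t1' + t2' <= T) by (unfold T; apply Rmax_r).
    destruct (schedule S p1 p2 e u1 u2 t1 t2 t1' t2' T Hax Hord) as
      [Tr1 [Tr2 [S1 [S2 [Cf [Co [E1 E2]]]]]]]; auto; try lra.
    assert (Un1 : fst u1 <> 0 \/ snd u1 <> 0).
    { destruct (Req_dec (fst u1) 0) as [Z|Z]; [right|left; auto]. intros Z'.
      rewrite Z, Z', Rabs_R0 in Hu1. lra. }
    assert (Un2 : fst u2 <> 0 \/ snd u2 <> 0).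
    { destruct (Req_dec (fst u2) 0) as [Z|Z]; [right|left; auto]. intros Z'.
      rewrite Z, Z', Rabs_R0 in Hu2. lra. }
    exists T, (traj p1 e u1 t1 t2), (traj p2 (nege e) u2 t1' t2').
    split. pose proof (Rmax_l (t1 + t2) (t1' + t2')). unfold T. lra.
    split; auto. split; auto. split.
    { intros x y Hx Hy. apply traj_turn in Hx; auto. apply traj_turn in Hy; auto.
      destruct Hx as [-> _]; destruct Hy as [-> _]. auto. }
    split.
    { intros x y Hx Hy. apply traj_turn in Hx; auto. apply traj_turn in Hy; auto.
      destruct Hx as [-> _]; destruct Hy as [-> _]. auto. }
    split; auto. split; auto. split; auto. split; auto.
    split. apply Cf. split. pose proof (Rmax_l (t1 + t2) (t1' + t2')). unfold T. lra. lra.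
    rewrite E1, E2. split; auto.
Qed.
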